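(* Let $\mathcal{U}=\{u_1,\ldots,u_M\}\subset\mathbb{R}\setminus\{0\}$, integers $N>k\ge1$, $\sigma_{N/k}^2>0$, and $y\in\mathbb{R}^N$. Let $[y]_{(i)}$ denote the $i$th largest entry of $y$. For $k_0\in\{0,\ldots,k\}$ define $$\xi_k^N(k_0;y)=\sum_{i=1}^{k_0}\min_{u\in\mathcal{U}}([y]_{(i)}-u)^2+\sum_{i=k_0+1}^{N-(k-k_0)}[y]_{(i)}^2+\sum_{i=N-(k-k_0)+1}^{N}\min_{u\in\mathcal{U}}([y]_{(i)}-u)^2,$$ and let $k_*\in\operatorname{argmin}_{k_0\in\{0,\ldots,k\}}\xi_k^N(k_0;y)$. Let $\mathcal{N}_1$ be the set of indices of the $k_*$ largest entries of $y$, $\mathcal{N}_2$ the set of indices of the $k-k_*$ smallest entries of $y$, and $\mathcal{N}_3=\{1,\ldots,N\}\setminus(\mathcal{N}_1\cup\mathcal{N}_2)$. Then the ML estimator $\hat{x}_{\mathrm{ML}}\in\operatorname{argmax}_{x\in\mathcal{X}_k^N(\mathcal{U})}p(y\mid x)$ satisfies $\hat{x}_{\mathrm{ML},n}=0$ for all $n\in\mathcal{N}_3$ and $\hat{x}_{\mathrm{ML},n}=\operatorname{argmin}_{u\in\mathcal{U}}(y_n-u)^2$ for all $n\in\mathcal{N}_1\cup\mathcal{N}_2$.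
   Context: $\mathcal{X}_k^N(\mathcal{U})$ is the set of $x\in\mathbb{R}^N$ with exactly $k$ nonzero entries, each belonging to $\mathcal{U}$. $p(y\mid x)=(2\pi\sigma_{N/k}^2)^{-N/2}\exp(-\|y-x\|_2^2/(2\sigma_{N/k}^2))$. Sums $\sum_{i=a}^{b}$ with $a>b$ are zero. *)

(* Defs.v *)
From HB Require Import structures.
From mathcomp Require Import all_boot all_order all_algebra all_fingroup.
From mathcomp Require Import all_classical all_reals all_analysis.
Set Implicit Arguments. Unset Strict Implicit. Unset Printing Implicit Defensive.
Import Order.TTheory GRing.Theory Num.Theory.
Local Open Scope ring_scope.

Section Defs.
Variable R : realType.

Definition minsq (U : seq R) (t : R) : R :=
  \big[Order.min/(t - head 0 U) ^+ 2]_(u <- U) (t - u) ^+ 2.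

Definition is_argminU (U : seq R) (t u : R) : Prop :=
  u \in U /\ forall v, v \in U -> (t - u) ^+ 2 <= (t - v) ^+ 2.

Definition in_X (N k : nat) (U : seq R) (x : 'I_N -> R) : Prop :=
  #|[set n | x n != 0]| = k /\ forall n, x n != 0 -> x n \in U.

(* Gaussian likelihood p(y | x) with variance s2 = sigma_{N/k}^2 *)
Definition lik (N : nat) (s2 : R) (y x : 'I_N -> R) : R :=
  powR (2 * pi * s2) (- (N%:R / 2)) *
  expR (- (\sum_(n < N) (y n - x n) ^+ 2) / (2 * s2)).

(* s sorts y in nonincreasing order: [y]_(i+1) = y (s i) (0-indexed i) *)
Definition sorts_desc (N : nat) (y : 'I_N -> R) (s : {perm 'I_N}) : Prop :=
  forall i j : 'I_N, (i <= j)%N -> y (s j) <= y (s i).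

(* xi_k^N(k0; y), written with 0-indexed sorted positions i:
   positions i < k0 and i >= N-(k-k0) use minsq, the others use y^2 *)
Definition xi (N k : nat) (U : seq R) (y : 'I_N -> R) (s : {perm 'I_N})
    (k0 : nat) : R :=
  \sum_(i < N) (if (i < k0)%N || (N - (k - k0) <= i)%N
                then minsq U (y (s i)) else y (s i) ^+ 2).

End Defs.

(* Main.v *)
Require Import Defs.
From HB Require Import structures.
From mathcomp Require Import all_boot all_order all_algebra all_fingroup.
From mathcomp Require Import all_classical all_reals all_analysis.
From mathcomp Require Import lra zify.
Import Order.TTheory GRing.Theory Num.Theory.
Local Open Scope ring_scope.

Section Aux.
Variable R : realType.

Lemma bigmin_le (U : seq R) (F : R -> R) (idx u : R) :
  u \in U -> \big[Order.min/idx]_(v <- U) F v <= F u.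
Proof.
elim: U => [|v r IH] //=; rewrite inE big_cons ge_min => /orP[/eqP->|/IH->].
  by rewrite lexx.
by rewrite orbT.
Qed.

Lemma bigmin_attained (U : seq R) (F : R -> R) (idx : R) :
  \big[Order.min/idx]_(v <- U) F v = idx \/
  exists2 u, u \in U & \big[Order.min/idx]_(v <- U) F v = F u.
Proof.
elim: U => [|v r IH]; first by left; rewrite big_nil.
rewrite big_cons /Order.min; case: ifP => _.
  by right; exists v => //; rewrite mem_head.
case: IH => [->|[u ur ->]]; first by left.
by right; exists u => //; rewrite inE ur orbT.
Qed.

Lemma minsq_le (U : seq R) t u : u \in U -> minsq U t <= (t - u) ^+ 2.
Proof. by move=> uU; rewrite /minsq; apply: bigmin_le. Qed.

Lemma minsq_att (U : seq R) t : U != [::] ->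
  exists2 u, u \in U & minsq U t = (t - u) ^+ 2.
Proof.
case: U => [//|u0 r] _; rewrite /minsq.
case: (bigmin_attained (u0 :: r) (fun v => (t - v) ^+ 2) ((t - head 0 (u0 :: r)) ^+ 2)) => [->|//].
by exists u0 => //; rewrite mem_head.
Qed.

Lemma argmin_minsq (U : seq R) t u : U != [::] -> is_argminU U t u ->
  (t - u) ^+ 2 = minsq U t.
Proof.
move=> U0 [uU H]; apply/eqP; rewrite eq_le minsq_le // andbT.
by case: (minsq_att U t U0) => v vU ->; apply: H.
Qed.

Definition hh (U : seq R) t := t ^+ 2 - minsq U t.

Lemma hh_quasi (U : seq R) ti tj tl : U != [::] -> tl <= tj -> tj <= ti ->
  hh U tj <= Num.max (hh U ti) (hh U tl).
Proof.
move=> U0 h1 h2; case: (minsq_att U tj U0) => u uU E.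
have Hi := minsq_le U ti u uU; have Hl := minsq_le U tl u uU.
rewrite /hh E le_max; case: (lerP 0 u) => hu.
  apply/orP; left; nra.
apply/orP; right; nra.
Qed.

Lemma comb (b : nat -> R) n : forall a (P : seq nat) k,
  uniq P -> (forall p, p \in P -> a <= p < a + n)%N -> size P = k ->
  (forall i j l, (a <= i)%N -> (i <= j)%N -> (j <= l)%N -> (l < a + n)%N ->
     b j <= Num.max (b i) (b l)) ->
  exists2 k0, (k0 <= k)%N & \sum_(p <- P) b p <=
     \sum_(a <= p < a + k0) b p + \sum_(a + n - (k - k0) <= p < a + n) b p.
Proof.
elim: n => [|n IH] a P k uP inP sP Q.
  case: P uP inP sP => [|p P] _ inP sP.
    rewrite -sP /=; exists 0%N => //; rewrite big_nil !big_geq ?addr0 //; lia.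
  by have := inP p (mem_head _ _); rewrite addn0; case/andP=> h1 h2; exfalso; lia.
case: k sP => [|k] sP.
  by move/size0nil: sP => ->; exists 0%N => //; rewrite big_nil !big_geq ?addr0 //; lia.
case: P uP inP sP => [//|p0 P0] uP inP sP.
set P := p0 :: P0 in uP inP sP *.
have p0P : p0 \in P by rewrite mem_head.
have [hp0a hp0b] : (a <= p0)%N /\ (p0 <= a + n)%N.
  by have /andP[? ?] := inP p0 p0P; split => //; lia.
case: (lerP (b (a + n)%N) (b a)) => hab.
- pose p := if a \in P then a else p0.
  have pP : p \in P by rewrite /p; case: ifP.
  have bp : b p <= b a.
    rewrite /p; case: ifP => _; first by [].
    by apply: le_trans (Q a p0 (a + n)%N _ _ _ _) _ => //; try lia; rewrite ge_max lexx hab.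
  have urem : uniq (rem p P) by apply: rem_uniq.
  have inrem : forall q, q \in rem p P -> (a.+1 <= q < a.+1 + n)%N.
    move=> q; rewrite (mem_rem_uniq _ uP) inE => /andP[qp qP].
    have /andP[h1 h2] := inP q qP.
    have qa : q != a.
      move: qp; rewrite /p; case: ifP => // aP _.
      by apply: contraFneq aP => <-.
    apply/andP; split; last by lia.
    by move: qa; rewrite neq_ltn => /orP[?|//]; lia.
  have srem : size (rem p P) = k by rewrite size_rem // sP.
  have [k0 hk0 Hs] := IH a.+1 (rem p P) k urem inrem srem
     (fun i j l h1 h2 h3 h4 => Q i j l ltac:(lia) h2 h3 ltac:(lia)).
  exists k0.+1 => //.
  rewrite (perm_big _ (perm_to_rem pP)) big_cons.
  rewrite (@big_ltn _ _ _ a (a + k0.+1)); last by lia.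
  have -> : (a + k0.+1 = a.+1 + k0)%N by lia.
  have -> : (a + n.+1 - (k.+1 - k0.+1) = a.+1 + n - (k - k0))%N by lia.
  have -> : (a + n.+1 = a.+1 + n)%N by lia.
  by rewrite -addrA; apply: lerD.
- pose p := if (a + n)%N \in P then (a + n)%N else p0.
  have pP : p \in P by rewrite /p; case: ifP.
  have bp : b p <= b (a + n)%N.
    rewrite /p; case: ifP => _; first by [].
    by apply: le_trans (Q a p0 (a + n)%N _ _ _ _) _ => //; try lia; rewrite ge_max lexx (ltW hab).
  have urem : uniq (rem p P) by apply: rem_uniq.
  have inrem : forall q, q \in rem p P -> (a <= q < a + n)%N.
    move=> q; rewrite (mem_rem_uniq _ uP) inE => /andP[qp qP].
    have /andP[h1 h2] := inP q qP.
    have qa : q != (a + n)%N.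
      move: qp; rewrite /p; case: ifP => // aP _.
      by apply: contraFneq aP => <-.
    apply/andP; split => //.
    by move: qa; rewrite neq_ltn => /orP[?|?]; lia.
  have srem : size (rem p P) = k by rewrite size_rem // sP.
  have [k0 hk0 Hs] := IH a (rem p P) k urem inrem srem
     (fun i j l h1 h2 h3 h4 => Q i j l h1 h2 h3 ltac:(lia)).
  exists k0; first by lia.
  rewrite (perm_big _ (perm_to_rem pP)) big_cons.
  have -> : (a + n.+1 - (k.+1 - k0) = a + n - (k - k0))%N by lia.
  rewrite addnS big_nat_recr /=; last by lia.
  rewrite addrA addrC; apply: lerD => //.
Qed.


Lemma split_sel (F : nat -> R) N k k0 : (k0 <= k)%N -> (k <= N)%N ->
  \sum_(i < N) (if ((i < k0)%N || (N - (k - k0) <= i)%N) then F i else 0) =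
  \sum_(0 <= p < k0) F p + \sum_(N - (k - k0) <= p < N) F p.
Proof.
move=> h1 h2.
rewrite -(big_mkord xpredT (fun i => if ((i < k0)%N || (N - (k - k0) <= i)%N) then F i else 0)).
rewrite (@big_cat_nat _ _ _ k0) /=; [|lia|lia].
rewrite (@big_cat_nat _ _ _ (N - (k - k0))%N k0) /=; [|lia|lia].
rewrite (@big1_seq _ _ _ _ (index_iota k0 (N - (k - k0)))); last first.
  move=> i /andP[_]; rewrite mem_index_iota => /andP[hi1 hi2].
  by have -> : ((i < k0)%N || (N - (k - k0) <= i)%N) = false by lia.
rewrite add0r; congr (_ + _); apply: eq_big_nat => i /andP[hi1 hi2].
  by have -> : ((i < k0)%N || (N - (k - k0) <= i)%N) = true by lia.
by have -> : ((i < k0)%N || (N - (k - k0) <= i)%N) = true by lia.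
Qed.

End Aux.
Arguments hh {R}. Arguments comb {R}. Arguments hh_quasi {R}. Arguments argmin_minsq {R}. Arguments minsq_le {R}. Arguments split_sel {R}.

Theorem proposition1 (R : realType) (U : seq R) (N k : nat) (s2 : R)
    (y : 'I_N -> R) (s : {perm 'I_N}) (kstar : nat) (xhat : 'I_N -> R) :
  U != [::] -> 0 \notin U ->
  (1 <= k)%N -> (k < N)%N -> 0 < s2 ->
  sorts_desc y s ->
  (kstar <= k)%N ->
  (forall k0 : nat, (k0 <= k)%N -> xi k U y s kstar <= xi k U y s k0) ->
  (* N1 = s @: {i < kstar}, N2 = s @: {i >= N - (k - kstar)}, N3 = the rest *)
  (forall i : 'I_N,
     ((i < kstar)%N || (N - (k - kstar) <= i)%N) ->
     is_argminU U (y (s i)) (xhat (s i))) ->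
  (forall i : 'I_N,
     ~~ ((i < kstar)%N || (N - (k - kstar) <= i)%N) -> xhat (s i) = 0) ->
  in_X k U xhat /\
  (forall x : 'I_N -> R, in_X k U x -> lik s2 y x <= lik s2 y xhat).
Proof.
move=> U0 U0n k1 kN s2p sd kk xik selH nselH.
have nzsel : forall i : 'I_N, (xhat (s i) != 0) = ((i < kstar)%N || (N - (k - kstar) <= i)%N).
  move=> i; case hi: (_ || _).
  - case: (selH i hi) => hU _; apply/negP => /eqP h0.
    by move: hU; rewrite h0 (negbTE U0n).
  - by rewrite nselH ?hi // eqxx.
split.
  split.
    suff : (#|[set n | xhat n != 0]|%:R : R) = k%:R by move/eqP; rewrite eqr_nat => /eqP.
    rewrite -sumr_const big_mkcond /=.
    rewrite (reindex_inj (@perm_inj _ s)) /=.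
    under eq_bigr => i _ do rewrite inE nzsel.
    rewrite (@split_sel R (fun _ => 1%R) N k kstar kk (ltnW kN)) !sumr_const_nat.
    by rewrite -mulrnDr; congr (_ *+ _); lia.
  move=> n; rewrite -(permKV s n) nzsel => hi.
  by case: (selH _ hi).
pose T (x : 'I_N -> R) := \sum_(n < N) (y n - x n) ^+ 2.
suff H : forall x, in_X k U x -> T xhat <= T x.
  move=> x /H Hx; rewrite /lik; apply: ler_wpM2l; first exact: powR_ge0.
  rewrite ler_expR; apply: ler_wpM2r; first by rewrite invr_ge0; lra.
  by rewrite lerN2.
move=> x [cx ux].
pose b (p : nat) : R := oapp (fun i : 'I_N => hh U (y (s i))) 0 (insub p).
have bE : forall i : 'I_N, b i = hh U (y (s i)) by move=> i; rewrite /b valK.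
have xiE : forall k0, (k0 <= k)%N -> xi k U y s k0 =
    \sum_(n < N) y n ^+ 2 - (\sum_(0 <= p < k0) b p + \sum_(N - (k - k0) <= p < N) b p).
  move=> k0 hk0; rewrite -split_sel //; last exact: ltnW.
  rewrite (reindex_inj (@perm_inj _ s)) -sumrB; apply: eq_bigr => i _.
  by case: ifP => _; rewrite ?bE /hh ?subr0 // opprB addrC subrK.
have TxhE : T xhat = xi k U y s kstar.
  rewrite /T (reindex_inj (@perm_inj _ s)); apply: eq_bigr => i _.
  case: ifP => hi; first by rewrite (argmin_minsq _ _ _ U0 (selH i hi)).
  by rewrite nselH ?hi // subr0.
pose P := [seq val (s^-1 n)%g | n <- enum [set n | x n != 0]].
have uP : uniq P.
  rewrite map_inj_uniq ?enum_uniq // => n1 n2 /val_inj; exact: perm_inj.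
have sP : size P = k by rewrite size_map -cardE cx.
have inP : forall p, p \in P -> (0 <= p < 0 + N)%N.
  by move=> p /mapP [n _ ->]; rewrite add0n ltn_ord.
have Q : forall i j l, (0 <= i)%N -> (i <= j)%N -> (j <= l)%N -> (l < 0 + N)%N ->
     b j <= Num.max (b i) (b l).
  move=> i j l _ hij hjl hl; rewrite add0n in hl.
  have hi : (i < N)%N by lia.
  have hj : (j < N)%N by lia.
  rewrite -[i]/(val (Ordinal hi)) -[j]/(val (Ordinal hj)) -[l]/(val (Ordinal hl)) !bE.
  by apply: hh_quasi => //; apply: sd.
have [k0 hk0 Hc] := comb b N 0%N P k uP inP sP Q.
rewrite !add0n in Hc.
have SP : \sum_(p <- P) b p = \sum_(n < N) (if x n != 0 then hh U (y n) else 0).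
  rewrite big_map big_enum /= -big_mkcond /=; apply: eq_big => n; first by rewrite inE.
  by move=> _; rewrite bE permKV.
rewrite TxhE; apply: le_trans (xik _ hk0) _; rewrite xiE //.
apply: le_trans (_ : \sum_(n < N) y n ^+ 2 - \sum_(p <- P) b p <= _).
  by apply: lerB => //; rewrite lexx.
rewrite SP -sumrB /T; apply: ler_sum => n _.
case: ifP => hn; last by move/negbFE/eqP: hn => ->; rewrite subr0 subr0.
by rewrite /hh opprB addrC subrK; apply: minsq_le; apply: ux; rewrite hn.
Qed.
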